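(* Let $\mathcal C\subseteq(S^2)^n$ be any nonempty finite set and let $x,y$ be drawn independently and uniformly at random from $\mathcal C$. Then for every $S\subseteq[n]$, \[ \Pr\bigl[x_s\not\perp y_s\text{ for all } s\in S\bigr]\ \ge\ 3^{-|S|}. \]
   Context: $S^2$ is the unit sphere in $\mathbb R^3$; $x_s$ denotes the $s$-th coordinate (a unit vector in $\mathbb R^3$) of $x\in(S^2)^n$, and $u\not\perp v$ means $\langle u,v\rangle\ne0$. *)

(* Defs.v *)
From mathcomp Require Import all_boot all_order all_algebra.
From mathcomp Require Import reals.
Set Implicit Arguments. Unset Strict Implicit. Unset Printing Implicit Defensive.
Import Order.TTheory GRing.Theory Num.Theory.
Local Open Scope ring_scope.

Definition dot3 (R : realType) (u v : 'rV[R]_3) : R := \sum_(i < 3) u 0 i * v 0 i.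

Definition on_spheres (R : realType) (n : nat) (x : {ffun 'I_n -> 'rV[R]_3}) : Prop :=
  forall s : 'I_n, dot3 (x s) (x s) = 1.

(* Pr_{x,y uniform independent on C}[ x_s not_perp y_s for all s in S ],
   C given as a duplicate-free list. *)
Definition prob_nonperp (R : realType) (n : nat)
  (C : seq {ffun 'I_n -> 'rV[R]_3}) (S : {set 'I_n}) : R :=
  (\sum_(x <- C) \sum_(y <- C)
     (if [forall s in S, dot3 (x s) (y s) != 0] then 1 else 0))
  / ((size C) ^ 2)%:R.

(* Main.v *)
Require Import Defs.
From mathcomp Require Import all_boot all_order all_algebra.
From mathcomp Require Import reals.
From mathcomp Require Import ring lra.
Import Order.TTheory GRing.Theory Num.Theory.
Local Open Scope ring_scope.
Set Implicit Arguments. Unset Strict Implicit.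

Section S.
Variable R : realType.
Variable n : nat.
Variable S : {set 'I_n}.
Implicit Types x y : {ffun 'I_n -> 'rV[R]_3}.

Lemma cs3 (u v : 'rV[R]_3) : dot3 u u = 1 -> dot3 v v = 1 -> dot3 u v ^+ 2 <= 1.
Proof.
rewrite /dot3 !big_ord_recr !big_ord0 /= => hu hv.
set u0 := u 0 _ in hu hv *. set u1 := u 0 _ in hu hv *. set u2 := u 0 _ in hu hv *.
set v0 := v 0 _ in hu hv *. set v1 := v 0 _ in hu hv *. set v2 := v 0 _ in hu hv *.
have e : (0 + u0 * u0 + u1 * u1 + u2 * u2) * (0 + v0 * v0 + v1 * v1 + v2 * v2) = 1.
  by rewrite hu hv mulr1.
have h1 := sqr_ge0 (u0 * v1 - u1 * v0).
have h2 := sqr_ge0 (u0 * v2 - u2 * v0).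
have h3 := sqr_ge0 (u1 * v2 - u2 * v1).
nra.
Qed.

Definition phi x s (p : 'I_3 * 'I_3) : R :=
  if s \in S then x s 0 p.1 * x s 0 p.2 else (p == (ord0, ord0))%:R.
Definition psi s (p : 'I_3 * 'I_3) : R :=
  if s \in S then (p.1 == p.2)%:R else (p == (ord0, ord0))%:R.
Definition aa x y s : R := \sum_p phi x s p * phi y s p.

Lemma sum_pair (F : 'I_3 -> 'I_3 -> R) :
  \sum_(p : 'I_3 * 'I_3) F p.1 p.2 = \sum_i \sum_j F i j.
Proof. by rewrite pair_big. Qed.

Lemma sum_pt (F : 'I_3 * 'I_3 -> R) :
  \sum_(p : 'I_3 * 'I_3) (p == (ord0, ord0))%:R * F p = F (ord0, ord0).
Proof.
rewrite (bigD1 (ord0, ord0)) //= ?eqxx mul1r big1 ?addr0 // => p /negbTE ->.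
by rewrite mul0r.
Qed.

Lemma aaE x y s : aa x y s = if s \in S then dot3 (x s) (y s) ^+ 2 else 1.
Proof.
rewrite /aa /phi; case: ifP => _.
  rewrite (sum_pair (fun i j => x s 0 i * x s 0 j * (y s 0 i * y s 0 j))).
  rewrite /dot3 expr2 mulr_suml; apply: eq_bigr => i _.
  rewrite mulr_sumr; apply: eq_bigr => j _; ring.
by rewrite (sum_pt (fun p => (p == (ord0, ord0))%:R)) ?eqxx.
Qed.

Lemma ind_ge x y : on_spheres x -> on_spheres y ->
  \prod_s aa x y s <= (if [forall s in S, dot3 (x s) (y s) != 0] then 1 else 0).
Proof.
move=> hx hy.
have h0 : forall s, 0 <= aa x y s by move=> s; rewrite aaE; case: ifP => // _; exact: sqr_ge0.
have h1 : forall s, aa x y s <= 1 by move=> s; rewrite aaE; case: ifP => // _; exact: cs3.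
case: ifP => [_|].
  by apply: prodr_ile1 => s _; rewrite h0 h1.
move/negbT; rewrite negb_forall_in => /existsP [s /andP [sS]].
rewrite negbK => /eqP hd.
by rewrite (bigD1 s) //= aaE sS hd expr0n /= mul0r.
Qed.

Definition Phi (f : {ffun 'I_n -> 'I_3 * 'I_3}) x := \prod_s phi x s (f s).
Definition Psi (f : {ffun 'I_n -> 'I_3 * 'I_3}) := \prod_s psi s (f s).

Lemma prodE x y : \prod_s aa x y s = \sum_f Phi f x * Phi f y.
Proof.
rewrite /aa bigA_distr_bigA; apply: eq_bigr => f _.
by rewrite /Phi -big_split.
Qed.

Lemma PhiPsi x : on_spheres x -> \sum_f Phi f x * Psi f = 1.
Proof.
move=> hx.
have -> : \sum_f Phi f x * Psi f = \prod_s \sum_p phi x s p * psi s p.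
  rewrite bigA_distr_bigA; apply: eq_bigr => f _.
  by rewrite /Phi /Psi -big_split.
apply: big1 => s _; rewrite /phi /psi; case: (s \in S).
  rewrite (sum_pair (fun i j => x s 0 i * x s 0 j * ((i == j)%:R : R))).
  rewrite -[RHS](hx s) /dot3; apply: eq_bigr => i _.
  rewrite (bigD1 i) //= eqxx mulr1 big1 ?addr0 // => j /negbTE.
  by rewrite eq_sym => ->; rewrite mulr0.
by rewrite (sum_pt (fun p => (p == (ord0, ord0))%:R)) ?eqxx.
Qed.

Lemma Psi2 : \sum_f Psi f ^+ 2 = 3 ^+ #|S|.
Proof.
have -> : \sum_f Psi f ^+ 2 = \prod_s \sum_p psi s p ^+ 2.
  rewrite bigA_distr_bigA; apply: eq_bigr => f _.
  by rewrite /Psi -prodrXl.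
rewrite -prodr_const (big_mkcond (fun s => s \in S)) /=.
apply: eq_bigr => s _; rewrite /psi; case: (s \in S).
  rewrite (sum_pair (fun i j => ((i == j)%:R : R) ^+ 2)).
  rewrite (eq_bigr (fun _ => 1)); first by rewrite sumr_const card_ord.
  move=> i _; rewrite (bigD1 i) //= eqxx expr1n big1 ?addr0 // => j /negbTE.
  by rewrite eq_sym => ->; rewrite expr0n.
rewrite (eq_bigr (fun p : 'I_3 * 'I_3 => (p == (ord0, ord0))%:R * (p == (ord0, ord0))%:R)).
  by rewrite (sum_pt (fun p => (p == (ord0, ord0))%:R)) ?eqxx.
by move=> p _; rewrite expr2.
Qed.

End S.

Unset Implicit Arguments. Set Strict Implicit.

Lemma sum1_seq (R : realType) (T : eqType) (C : seq T) : \sum_(x <- C) (1 : R) = (size C)%:R.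
Proof. elim: C => [|a C IH]; first by rewrite big_nil. by rewrite big_cons IH -natr1 addrC. Qed.

Theorem mainTheorem8 (R : realType) (n : nat)
  (C : seq {ffun 'I_n -> 'rV[R]_3})
  (HCuniq : uniq C) (HCne : C != [::])
  (HCsph : forall x, x \in C -> on_spheres x)
  (S : {set 'I_n}) :
  ((3 : R) ^+ #|S|)^-1 <= prob_nonperp C S.
Proof.
set N : R := 3 ^+ #|S|.
set c : R := (size C)%:R.
have Npos : 0 < N by rewrite exprn_gt0.
have cpos : 0 < c by rewrite ltr0n lt0n size_eq0.
set A := fun f => \sum_(x <- C) Phi S f x.
have H1 : \sum_(x <- C) \sum_(y <- C) \prod_s aa S x y s <=
  \sum_(x <- C) \sum_(y <- C) (if [forall s in S, dot3 (x s) (y s) != 0] then (1 : R) else 0).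
  rewrite big_seq [X in _ <= X]big_seq; apply: ler_sum => x hx.
  rewrite big_seq [X in _ <= X]big_seq; apply: ler_sum => y hy.
  by apply: ind_ge; apply: HCsph.
have H2 : \sum_(x <- C) \sum_(y <- C) \prod_s aa S x y s = \sum_f A f ^+ 2.
  under eq_bigr do under eq_bigr do rewrite prodE.
  under eq_bigr do rewrite exchange_big /=.
  rewrite exchange_big /=; apply: eq_bigr => f _.
  rewrite /A expr2 mulr_suml; apply: eq_bigr => x _.
  by rewrite mulr_sumr.
have H3 : \sum_f A f * Psi R S f = c.
  rewrite /A; under eq_bigr do rewrite mulr_suml.
  rewrite exchange_big /= big_seq (eq_bigr (fun _ => 1)).
    by rewrite -big_seq sum1_seq.
  by move=> x hx; apply: PhiPsi; apply: HCsph.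
have H4 : 0 <= \sum_f (N * A f - c * Psi R S f) ^+ 2.
  by apply: sumr_ge0 => f _; exact: sqr_ge0.
have H5 : \sum_f (N * A f - c * Psi R S f) ^+ 2 =
   N ^+ 2 * \sum_f A f ^+ 2 - 2 * N * c * \sum_f A f * Psi R S f
   + c ^+ 2 * \sum_f Psi R S f ^+ 2.
  rewrite !mulr_sumr -sumrB -big_split /=; apply: eq_bigr => f _; ring.
rewrite H3 (@Psi2 R n S) -/N in H5.
have H6 : c ^+ 2 <= N * \sum_f A f ^+ 2.
  have : 0 <= N * (N * \sum_f A f ^+ 2 - c ^+ 2).
    rewrite (_ : N * _ = N ^+ 2 * \sum_f A f ^+ 2 - 2 * N * c * c + c ^+ 2 * N); first by rewrite -H5.
    ring.
  by rewrite pmulr_rge0 // subr_ge0.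
rewrite /prob_nonperp natrX -/c ler_pdivlMr ?exprn_gt0 //.
apply: (le_trans _ H1); rewrite H2.
rewrite -[X in _ <= X](mulKf (lt0r_neq0 Npos)).
by apply: ler_wpM2l => //; rewrite invr_ge0 ltW.
Qed.
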